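(* For integers $m,n\ge0$, $$\sum_{i=2n-m+1}^{m}\binom{m}{i}\frac{(m+i)!}{(m+i-2n-1)!}(-2)^{-i}=0,$$ where $\binom{m}{i}=0$ for $i<0$. *)

(* Defs.v *)
From mathcomp Require Import all_boot all_order all_algebra.
Set Implicit Arguments. Unset Strict Implicit. Unset Printing Implicit Defensive.

(* Main.v *)
Require Import Defs.
From mathcomp Require Import all_boot all_order all_algebra.
From mathcomp Require Import ring zify.
Import Order.TTheory GRing.Theory Num.Theory.
Local Open Scope ring_scope.

Lemma derivn_compS (k : nat) (q : {poly rat}) :
  (q \Po (-'X - 1))^`(k) = (-1)^+k *: (q^`(k) \Po (-'X - 1)).
Proof.
elim: k q => [|k IH] q; first by rewrite !derivn0 expr0 scale1r.
rewrite derivSn deriv_comp derivB derivN derivX derivC subr0.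
rewrite mulrN1 derivnN IH -derivSn exprS mulN1r scaleNr.
by [].
Qed.

Lemma sym (k : nat) (r : {poly rat}) : r \Po (-'X - 1) = r -> odd k ->
  (r^`(k)).[-(1/2)] = 0.
Proof.
move=> hr ok.
have h : (r^`(k)).[-(1/2)] = - (r^`(k)).[-(1/2)].
  rewrite -{1}hr derivn_compS hornerZ horner_comp.
  have -> : (- 'X - 1 : {poly rat}).[-(1/2)] = -(1/2).
    by rewrite hornerD hornerN hornerX hornerN hornerC; field.
  by rewrite -signr_odd ok expr1 mulN1r.
move: h; set v := _.[_] => h.
have : v *+ 2 = 0 by rewrite mulr2n {1}h addNr.
by move/eqP; rewrite mulrn_eq0 /= => /eqP.
Qed.

Definition rr (m : nat) : {poly rat} := ('X * ('X + 1)) ^+ m.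

Lemma rr_sym m : rr m \Po (-'X - 1) = rr m.
Proof.
rewrite /rr -comp_Xn_poly -comp_polyA comp_polyM comp_polyD comp_polyX comp_polyC.
congr (_ \Po _). ring.
Qed.

Lemma rr_exp m : rr m = \sum_(i < m.+1) 'X^(m + i) *+ 'C(m, i).
Proof.
rewrite /rr exprMn exprD1n mulr_sumr; apply: eq_bigr => i _.
by rewrite mulrnAr exprD.
Qed.

Lemma rr_der m k (x : rat) : ((rr m)^`(k)).[x] =
  \sum_(i < m.+1) 'C(m, i)%:R * ((m + i) ^_ k)%:R * x ^+ (m + i - k).
Proof.
rewrite rr_exp raddf_sum horner_sum; apply: eq_bigr => i _.
idtac.
rewrite raddfMn /= derivnXn.
rewrite hornerMn hornerMn hornerXn.
rewrite -mulrnA -[LHS]mulr_natr natrM; ring.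
Qed.


Lemma L1 m n i : (2*n+1-m <= i)%N -> (2*n+1 <= m+i)%N. Proof. lia. Qed.
Lemma L2 m n i : (i < 2*n+1-m)%N -> (m+i < 2*n+1)%N. Proof. lia. Qed.
Lemma L3 m n i : (m.+1 < 2*n+1-m)%N -> (i < m.+1)%N -> (m+i < 2*n+1)%N. Proof. lia. Qed.

Lemma step2 (m n : nat) (x : rat) :
(\sum_((2 * n + 1 - m)%N <= i < m.+1)
   'C(m, i)%:R * ((m + i) ^_ (2 * n + 1))%:R * x ^+ i) = 
(\sum_(0 <= i < m.+1) 'C(m, i)%:R * ((m + i) ^_ (2 * n + 1))%:R * x ^+ i).
Proof.
  case: (leqP (2 * n + 1 - m) m.+1) => hlo.
    rewrite [in RHS](big_cat_nat _ (n:=(2 * n + 1 - m)%N)) //=.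
    rewrite [X in _ = X + _]big1_seq ?add0r // => i /andP[_].
    rewrite mem_index_iota => /andP[_ hi].
    rewrite ffact_small. by rewrite mulr0 mul0r. exact: L2.
  rewrite big_geq; last exact: ltnW.
  rewrite big1_seq // => i /andP[_].
  rewrite mem_index_iota => /andP[_ hi].
  rewrite ffact_small. by rewrite mulr0 mul0r. exact: L3.
Qed.

Lemma step1 (m n : nat) :
  \sum_((2 * n + 1 - m)%N <= i < m.+1)
     ('C(m, i)%:R * (((m + i)`!)%:R / ((m + i - (2 * n + 1))`!)%:R)
        * ((- 2 : rat) ^+ i)^-1) =
  \sum_((2 * n + 1 - m)%N <= i < m.+1)
   'C(m, i)%:R * ((m + i) ^_ (2 * n + 1))%:R * (-(1/2)) ^+ i.
Proof.
have hx : ((-2 : rat))^-1 = -(1/2) by field.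
apply: eq_big_nat => i /andP[hi _].
have hk : (2 * n + 1 <= m + i)%N by exact: L1.
rewrite -exprVn hx -(ffact_fact hk) natrM mulfK //.
by rewrite pnatr_eq0 -lt0n fact_gt0.
Qed.

Lemma step3 (m k : nat) (x : rat) : x != 0 ->
  \sum_(i < m.+1) 'C(m, i)%:R * ((m + i) ^_ k)%:R * x ^+ (m + i - k) = 0 ->
  \sum_(0 <= i < m.+1) 'C(m, i)%:R * ((m + i) ^_ k)%:R * x ^+ i = 0.
Proof.
move=> x0 hv.
have hx0 : x ^+ m != 0 by rewrite expf_neq0.
apply: (mulfI hx0); rewrite mulr0 big_mkord mulr_sumr.
transitivity (x ^+ k * \sum_(i < m.+1) 'C(m, i)%:R * ((m + i) ^_ k)%:R * x ^+ (m + i - k)); last by rewrite hv mulr0.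
rewrite mulr_sumr; apply: eq_bigr => i _.
case: (leqP k (m + i)) => hk.
  by rewrite mulrCA -exprD mulrCA -exprD subnKC.
by rewrite ffact_small // mulr0n !(mulr0, mul0r).
Qed.

Theorem lemma4p10 (m n : nat) :
  \sum_((2 * n + 1 - m)%N <= i < m.+1)
     ('C(m, i)%:R * (((m + i)`!)%:R / ((m + i - (2 * n + 1))`!)%:R)
        * ((- 2 : rat) ^+ i)^-1) = 0.
Proof.
rewrite step1 step2; apply: step3.
  by rewrite oppr_eq0 mulf_neq0 // invr_eq0.
rewrite -rr_der; apply: sym; first exact: rr_sym.
by rewrite addn1 /= mul2n odd_double.
Qed.
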